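(* Let $n\ge1$ and \[P^n=\Big\{x\in[0,4]^n:\sum_{i\in S}x_i+\sum_{i\notin S}(4-x_i)\ge\tfrac12\ \ \forall S\subseteq\{1,\dots,n\}\Big\},\] with all variables integer. Then every complete branch-and-bound tree for $P^n\cap\mathbb{Z}^n$ (with root label $[0,4]^n$) has at least $2\cdot2^n-1$ leaf nodes.
   Context: A branch-and-bound tree for $P^n\cap\mathbb{Z}^n$ is a rooted binary tree whose nodes are labeled by polyhedra: the root is labeled $[0,4]^n$, and each non-leaf node labeled $D'$ has exactly two children labeled $D'\cap\{x:x_i\le t\}$ and $D'\cap\{x:x_i\ge t+1\}$ for some $i\in\{1,\dots,n\}$ and $t\in\mathbb{Z}$. The tree is complete if $\mathrm{conv}(P^n\cap\mathbb{Z}^n)=\mathrm{conv}\big(\bigcup_{N\text{ leaf}}(N\cap P^n)\big)$. The size of a tree is its number of leaf nodes. *)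

(* Defs.v *)
From HB Require Import structures.
From mathcomp Require Import all_boot all_order all_algebra.
From Stdlib Require Rdefinitions.
From mathcomp Require Import Rstruct.
Set Implicit Arguments. Unset Strict Implicit. Unset Printing Implicit Defensive.
Import Order.TTheory GRing.Theory Num.Theory.
Local Open Scope ring_scope.

Definition vec (n : nat) := 'rV[Rdefinitions.R]_n.

Definition cube (n : nat) (x : vec n) : Prop :=
  forall i : 'I_n, 0 <= x 0 i <= 4.

Definition Pn (n : nat) (x : vec n) : Prop :=
  cube x /\
  forall S : {set 'I_n},
    1 / 2 <= \sum_(i in S) x 0 i + \sum_(i in ~: S) (4 - x 0 i).

Definition integral (n : nat) (x : vec n) : Prop :=
  forall i : 'I_n, exists z : int, x 0 i = z%:~R.

Definition conv (n : nat) (A : vec n -> Prop) (x : vec n) : Prop :=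
  exists (k : nat) (w : 'I_k -> Rdefinitions.R) (p : 'I_k -> vec n),
    [/\ forall j, 0 <= w j, \sum_(j < k) w j = 1, forall j, A (p j)
      & x = \sum_(j < k) w j *: p j].

(* a branch-and-bound tree: a leaf, or a branching on x_i <= t / x_i >= t+1 *)
Inductive bbtree (n : nat) : Type :=
| Leaf : bbtree n
| Branch : 'I_n -> int -> bbtree n -> bbtree n -> bbtree n.

Fixpoint nleaves (n : nat) (T : bbtree n) : nat :=
  match T with
  | Leaf => 1
  | Branch _ _ l r => nleaves l + nleaves r
  end.

Fixpoint in_leaf_union (n : nat) (T : bbtree n) (D : vec n -> Prop)
    (x : vec n) : Prop :=
  match T with
  | Leaf => D x
  | Branch i t l r =>
      in_leaf_union l (fun y => D y /\ y 0 i <= t%:~R) x \/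
      in_leaf_union r (fun y => D y /\ (t + 1)%:~R <= y 0 i) x
  end.

Definition complete (n : nat) (T : bbtree n) : Prop :=
  forall x : vec n,
    conv (fun y => Pn y /\ integral y) x <->
    conv (fun y => in_leaf_union T (@cube n) y /\ Pn y) x.

(* Main.v *)
Require Import Defs.
From mathcomp Require Import all_boot all_order all_algebra.
From mathcomp Require Import Rstruct zify lra.
Set Implicit Arguments. Unset Strict Implicit. Unset Printing Implicit Defensive.
Import Order.TTheory GRing.Theory Num.Theory.
Local Open Scope ring_scope.

Notation RR := Rdefinitions.R.

Lemma sumSC n (S : {set 'I_n}) (F G : 'I_n -> RR) :
  \sum_(j in S) F j + \sum_(j in ~: S) G j = \sum_j (if j \in S then F j else G j).
Proof.
rewrite [RHS](bigID (mem S)) /=; congr (_ + _); apply: eq_big => j; rewrite ?inE //=.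
- by move=> ->.
- by move/negbTE=> ->.
Qed.

Definition gfun n (S : {set 'I_n}) (x : vec n) : RR :=
  \sum_j (if j \in S then x 0 j else 4 - x 0 j).

Definition Good n (x : vec n) := conv (fun y => Pn y /\ integral y) x.

Lemma int_g n (S : {set 'I_n}) (x : vec n) : integral x -> exists m : int, gfun S x = m%:~R.
Proof.
move=> Hx; rewrite /gfun.
apply: (big_ind (fun v => exists m : int, v = m%:~R)).
- by exists 0.
- by move=> a b [m1 ->] [m2 ->]; exists (m1 + m2); rewrite intrD.
- move=> j _; have [z ->] := Hx j; case: (j \in S); first by exists z.
  by exists (4 - z); rewrite intrB.
Qed.

Lemma g1 n (S : {set 'I_n}) (x : vec n) : Pn x -> integral x -> 1 <= gfun S x.
Proof.
move=> [_ HP] Hx; have := HP S; rewrite sumSC -/(gfun S x).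
have [m ->] := int_g S Hx; rewrite ler1z; case: (lerP 1 m) => // h.
have : m <= 0 by lia.
rewrite -(ler_int RR) => h2 h3; exfalso; move: h2 h3 => /=; lra.
Qed.

Lemma g_conv n (S : {set 'I_n}) (x : vec n) : Good x -> 1 <= gfun S x.
Proof.
case=> k [w [p [w0 w1 Hp ->]]].
have E : gfun S (\sum_(j < k) w j *: p j) = \sum_(j < k) w j * gfun S (p j).
  rewrite /gfun.
  under eq_bigr => i _ do rewrite summxE.
  under [RHS]eq_bigr => j _ do rewrite mulr_sumr.
  rewrite [RHS]exchange_big /=; apply: eq_bigr => i _.
  case: (i \in S).
    by apply: eq_bigr => j _; rewrite mxE.
  rewrite -{1}(mulr1 4) -w1 mulr_sumr -sumrB; apply: eq_bigr => j _.
  by rewrite mxE mulrBr mulrC.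
rewrite E.
have : \sum_(j < k) w j * 1 <= \sum_(j < k) w j * gfun S (p j).
  apply: ler_sum => j _; apply: ler_wpM2l; first exact: w0.
  by case: (Hp j) => ? ?; apply: g1.
by under eq_bigr do rewrite mulr1; rewrite w1.
Qed.

Definition boxP n (lo hi : 'I_n -> int) (y : vec n) : Prop :=
  forall j, (lo j)%:~R <= y 0 j <= (hi j)%:~R.
Definition hasv n (lo hi : 'I_n -> int) : Prop :=
  forall j, (lo j <= 0 <= hi j) \/ (lo j <= 4 <= hi j).

Lemma box_cube n (lo hi : 'I_n -> int) y :
  (forall j, 0 <= lo j) -> (forall j, hi j <= 4) -> boxP lo hi y -> cube y.
Proof.
move=> Hlo Hhi Hb j; have /andP[a b] := Hb j.
have c : (0 : RR) <= (lo j)%:~R by rewrite ler0z.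
have d : ((hi j)%:~R : RR) <= (4 : int)%:~R by rewrite ler_int.
apply/andP; split; [exact: le_trans c a | exact: le_trans b d].
Qed.

Lemma leaf_deg n (lo hi : 'I_n -> int) :
  (forall j, 0 <= lo j) -> (forall j, hi j <= 4) -> hasv lo hi ->
  (forall y, boxP lo hi y -> Pn y -> Good y) -> forall j, lo j = hi j.
Proof.
move=> Hlo Hhi Hv H i; apply/eqP/negPn/negP => Hne.
have lt : lo i < hi i by have := Hv i; have := Hlo i; lia.
pose v := fun j => if lo j == 0 then 0 else 4 : RR.
pose y : vec n := \row_j (if j == i then (if lo i == 0 then 1/2 else 7/2) else v j).
pose S := [set j | lo j == 0].
have yb : boxP lo hi y.
  move=> j; rewrite mxE /v.
  have Lj : (0:RR) <= (lo j)%:~R by rewrite ler0z.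
  have Hj : ((hi j)%:~R : RR) <= 4 by rewrite -[4 : RR]/((4:int)%:~R) ler_int.
  case: eqP => [->|ne].
    have h1 : ((lo i)%:~R : RR) + 1 <= (hi i)%:~R.
      by rewrite -[1 : RR]/((1:int)%:~R) -intrD ler_int; lia.
    case: eqP => h0.
      rewrite h0 /=; have : ((hi i)%:~R : RR) >= 1 by rewrite ler1z; lia.
      move=> h; apply/andP; split; lra.
    have : ((hi i)%:~R : RR) >= 4 by rewrite -[4 : RR]/((4:int)%:~R) ler_int; have := Hv i; have := Hlo i; lia.
    have : ((hi i)%:~R : RR) <= 4 by rewrite -[4 : RR]/((4:int)%:~R) ler_int; have := Hhi i; lia.
    move: h1 => /=; move=> h1 h2 h3; apply/andP; split; lra.
  case: eqP => h0.
    rewrite h0 /=; have : ((hi j)%:~R : RR) >= 0 by rewrite ler0z; have := Hv j; have := Hlo j; lia.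
    by move=> h; apply/andP; split.
  have : ((hi j)%:~R : RR) >= 4 by rewrite -[4 : RR]/((4:int)%:~R) ler_int; have := Hv j; have := Hlo j; lia.
  have : ((lo j)%:~R : RR) <= 4 by rewrite -[4 : RR]/((4:int)%:~R) ler_int; have := Hv j; have := Hlo j; lia.
  by move=> h h'; apply/andP; split.
have yc := box_cube Hlo Hhi yb.
have yP : Pn y.
  split => // T; rewrite sumSC (bigD1 i) //=.
  have : 0 <= \sum_(j < n | j != i) (if j \in T then y 0 j else 4 - y 0 j).
    apply: sumr_ge0 => j _; have /andP[a b] := yc j; case: (j \in T) => //; lra.
  have : 1/2 <= (if i \in T then y 0 i else 4 - y 0 i).
    rewrite mxE eqxx; case: (i \in T); case: (lo i == 0); lra.
  by move=> h1 h2; rewrite -[1/2]addr0; apply: lerD.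
have := g_conv S (H y yb yP).
have -> : gfun S y = 1/2.
  rewrite /gfun (bigD1 i) //= big1 ?addr0.
    by rewrite !inE mxE eqxx; case: (lo i == 0) => /=; lra.
  move=> j /negbTE ji; rewrite !inE mxE ji /v; case: (lo j == 0) => /=; lra.
lra.
Qed.

Definition freeS n (lo hi : 'I_n -> int) : {set 'I_n} :=
  [set j | (lo j == 0) && (hi j == 4)].
Definition thick n (lo hi : 'I_n -> int) : bool :=
  [exists j, (j \notin freeS lo hi) && (lo j < hi j)].

Lemma freeS_ext n (lo hi lo' hi' : 'I_n -> int) :
  lo =1 lo' -> hi =1 hi' -> freeS lo hi = freeS lo' hi'.
Proof. by move=> e1 e2; apply/setP => j; rewrite !inE e1 e2. Qed.

Lemma thick_ext n (lo hi lo' hi' : 'I_n -> int) :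
  lo =1 lo' -> hi =1 hi' -> thick lo hi = thick lo' hi'.
Proof.
move=> e1 e2; rewrite /thick (freeS_ext e1 e2).
by apply: eq_existsb => j; rewrite e1 e2.
Qed.

Lemma ilu_mono n (T : bbtree n) : forall (D D' : vec n -> Prop),
  (forall y, D y -> D' y) -> forall x, in_leaf_union T D x -> in_leaf_union T D' x.
Proof.
elim: T => [|i t l IHl r IHr] D D' HD x /=; first by apply: HD.
case=> Hx; [left; apply: IHl Hx | right; apply: IHr Hx];
  by move=> y [Hy1 Hy2]; split => //; apply: HD.
Qed.

Lemma nleaves_pos n (T : bbtree n) : (1 <= nleaves T)%N.
Proof. elim: T => //= ? ? l Hl r Hr; lia. Qed.

Lemma main n (T : bbtree n) : forall lo hi : 'I_n -> int,
  (forall j, 0 <= lo j) -> (forall j, hi j <= 4) -> hasv lo hi ->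
  (forall y, in_leaf_union T (boxP lo hi) y -> Pn y -> Good y) ->
  (2 * 2 ^ #|freeS lo hi| - 1 + thick lo hi <= nleaves T)%N.
Proof.
elim: T => [|i t l IHl r IHr] lo hi Hlo Hhi Hv H /=.
  have E := leaf_deg Hlo Hhi Hv H.
  have -> : freeS lo hi = set0.
    by apply/setP => j; rewrite !inE E; apply/negP => /andP[/eqP a /eqP b]; rewrite a in b.
  have -> : thick lo hi = false.
    by apply/negbTE/existsPn => j; rewrite E ltxx andbF.
  by rewrite cards0.
pose hi' := fun j => if j == i then (if t <= hi i then t else hi i) else hi j.
pose lo' := fun j => if j == i then (if lo i <= t + 1 then t + 1 else lo i) else lo j.
have Hl : forall y, in_leaf_union l (boxP lo hi') y -> Pn y -> Good y.
  move=> y Hy; apply: H; left; apply: ilu_mono Hy => x Hx; split.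
    move=> j; have := Hx j; rewrite /hi'; case: eqP => [->|//].
    case: ifP => h /andP[a b]; rewrite a /= (le_trans b) // ler_int; lia.
  have := Hx i; rewrite /hi' eqxx; case: ifP => h /andP[_ b] //.
  apply: le_trans b _; rewrite ler_int; lia.
have Hr : forall y, in_leaf_union r (boxP lo' hi) y -> Pn y -> Good y.
  move=> y Hy; apply: H; right; apply: ilu_mono Hy => x Hx; split.
    move=> j; have := Hx j; rewrite /lo'; case: eqP => [->|//].
    case: ifP => h /andP[a b]; rewrite b andbT (le_trans _ a) // ler_int; lia.
  have := Hx i; rewrite /lo' eqxx; case: ifP => h /andP[a _] //.
  apply: le_trans a; rewrite ler_int; lia.
have Hhi' : forall j, hi' j <= 4.
  move=> j; rewrite /hi'; have := Hhi j; have := Hhi i; case: eqP => _ //; case: ifP; lia.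
have Hlo' : forall j, 0 <= lo' j.
  move=> j; rewrite /lo'; have := Hlo j; have := Hlo i; case: eqP => _ //; case: ifP; lia.
have pl := nleaves_pos l; have pr := nleaves_pos r.
have Hvl : (lo i <= 0 <= hi' i) \/ (lo i <= 4 <= hi' i) -> hasv lo hi'.
  move=> hi0 j; case: (eqVneq j i) => [->|ne]; first exact: hi0.
  rewrite /hi' (negbTE ne); exact: Hv.
have Hvr : (lo' i <= 0 <= hi i) \/ (lo' i <= 4 <= hi i) -> hasv lo' hi.
  move=> hi0 j; case: (eqVneq j i) => [->|ne]; first exact: hi0.
  rewrite /lo' (negbTE ne); exact: Hv.
have hii : hi' i = if t <= hi i then t else hi i by rewrite /hi' eqxx.
have loi : lo' i = if lo i <= t + 1 then t + 1 else lo i by rewrite /lo' eqxx.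
have ehl : (hi i <= t) -> hi =1 hi'.
  move=> h j; rewrite /hi'; case: eqP => [->|//]; case: ifP => //; lia.
have elr : (t + 1 <= lo i) -> lo =1 lo'.
  move=> h j; rewrite /lo'; case: eqP => [->|//]; case: ifP => //; lia.
case: (lerP (hi i) t) => t1.
  have e := ehl t1.
  have hv : hasv lo hi' by move=> j; rewrite -e; exact: Hv.
  have := IHl lo hi' Hlo Hhi' hv Hl.
  rewrite -(freeS_ext (frefl lo) e) -(thick_ext (frefl lo) e) => h.
  by apply: leq_trans h _; apply: leq_addr.
case: (lerP (t + 1) (lo i)) => t2.
  have e := elr t2.
  have hv : hasv lo' hi by move=> j; rewrite -e; exact: Hv.
  have := IHr lo' hi Hlo' Hhi hv Hr.
  rewrite -(freeS_ext e (frefl hi)) -(thick_ext e (frefl hi)) => h.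
  by apply: leq_trans h _; apply: leq_addl.
case: (boolP (i \in freeS lo hi)) => iF.
  have := iF; rewrite inE => /andP[/eqP l0 /eqP h4].
  have Fl : freeS lo hi' = freeS lo hi :\ i.
    apply/setP => j; rewrite !inE /hi'; case: (eqVneq j i) => [->|ne] /=; last by [].
    rewrite l0 h4 /=; case: ifP => h; lia.
  have Fr : freeS lo' hi = freeS lo hi :\ i.
    apply/setP => j; rewrite !inE /lo'; case: (eqVneq j i) => [->|ne] /=; last by [].
    rewrite l0 h4 /=; case: ifP => h; lia.
  have := IHl lo hi' Hlo Hhi' (Hvl ltac:(left; rewrite hii; case: ifP; lia)) Hl.
  have := IHr lo' hi Hlo' Hhi (Hvr ltac:(right; rewrite loi; case: ifP; lia)) Hr.
  rewrite Fl Fr (cardsD1 i (freeS lo hi)) iF.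
  have thl : thick lo hi || (1 <= t) -> thick lo hi'.
    case/orP => [/existsP[j /andP[jF jlt]]|t1'].
      apply/existsP; exists j; rewrite Fl in_setD1 negb_and jF orbT /=.
      rewrite /hi'; case: eqP => [ji|//]; by rewrite ji iF in jF.
    apply/existsP; exists i; rewrite Fl in_setD1 eqxx /= hii; case: ifP; lia.
  have thr : thick lo hi || (t <= 2) -> thick lo' hi.
    case/orP => [/existsP[j /andP[jF jlt]]|t1'].
      apply/existsP; exists j; rewrite Fr in_setD1 negb_and jF orbT /=.
      rewrite /lo'; case: eqP => [ji|//]; by rewrite ji iF in jF.
    apply/existsP; exists i; rewrite Fr in_setD1 eqxx /= loi; case: ifP; lia.
  have key : (thick lo hi + 1 <= thick lo hi' + thick lo' hi)%N.
    case: (boolP (thick lo hi)) => th.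
      have -> : thick lo hi' by apply: thl; rewrite th.
      by have -> : thick lo' hi by apply: thr; rewrite th.
    case: (boolP (1 <= t)) => t1'.
      by have -> : thick lo hi' by apply: thl; rewrite t1' orbT.
    have -> : thick lo' hi by apply: thr; apply/orP; right; lia.
    by case: (thick lo hi').
  rewrite expnS.
  have : (0 < 2 ^ #|freeS lo hi :\ i|)%N by rewrite expn_gt0.
  move: key (2 ^ #|freeS lo hi :\ i|)%N => key X.
  move: (thick lo hi) (thick lo hi') (thick lo' hi) key => a b c.
  case: a; case: b; case: c => /= key; lia.
have Fl : freeS lo hi' = freeS lo hi.
  apply/setP => j; rewrite !inE /hi'; case: (eqVneq j i) => [->|ne] //=.
  move: iF; rewrite inE; have := Hhi i; case: ifP => h; lia.
have Fr : freeS lo' hi = freeS lo hi.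
  apply/setP => j; rewrite !inE /lo'; case: (eqVneq j i) => [->|ne] //=.
  move: iF; rewrite inE; have := Hlo i; case: ifP => h; lia.
have hl := Hlo i; have hh := Hhi i; case: (Hv i) => [h0|h4].
  have := IHl lo hi' Hlo Hhi' (Hvl ltac:(left; rewrite hii; case: ifP; lia)) Hl.
  rewrite Fl; move: (2 ^ #|freeS lo hi|)%N => X; case: (thick lo hi); case: (thick lo hi') => /=; lia.
have := IHr lo' hi Hlo' Hhi (Hvr ltac:(right; rewrite loi; case: ifP; lia)) Hr.
rewrite Fr; move: (2 ^ #|freeS lo hi|)%N => X; case: (thick lo hi); case: (thick lo' hi) => /=; lia.
Qed.

Local Close Scope ring_scope.

Theorem proposition7 (n : nat) (T : bbtree n) :
  (1 <= n)%N -> complete T -> (2 * 2 ^ n - 1 <= nleaves T)%N.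
Proof.
move=> _ HC.
pose lo0 := fun _ : 'I_n => (0 : int).
pose hi0 := fun _ : 'I_n => (4 : int).
have Hlo : forall j, (0 <= lo0 j)%R by [].
have Hhi : forall j, (hi0 j <= 4)%R by [].
have Hv : hasv lo0 hi0 by move=> j; left.
have H : forall y, in_leaf_union T (boxP lo0 hi0) y -> Pn y -> Good y.
  move=> y Hy Py; apply/HC; exists 1%N, (fun _ => 1%R), (fun _ => y); split => //;
    try by rewrite big_ord1 ?scale1r.
have := main Hlo Hhi Hv H.
have -> : freeS lo0 hi0 = setT by apply/setP => j; rewrite !inE.
have -> : thick lo0 hi0 = false.
  by apply/negbTE/existsPn => j; rewrite inE.
by rewrite cardsT card_ord addn0.
Qed.
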